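(* For any fixed integers $k\ge1$ and $d\ge2$, \[M_k(d,n)\ge T\big(n,N_k(d)\big)\ge\frac{n^2}{2}\Big(1-\frac1{N_k(d)}\Big)+O(1).\]
   Context: A set $P\subseteq\mathbb{R}^d$ is separated if $\|p_1-p_2\|\ge1$ for all distinct $p_1,p_2\in P$. $M_k(d,n)$ is the largest $M$ for which there exist a separated set $S\subseteq\mathbb{R}^d$ of $n$ points and reals $1\le t_1\le\dots\le t_k$ such that at least $M$ pairs $\{p_1,p_2\}\subseteq S$ satisfy $\|p_1-p_2\|\in\bigcup_{i=1}^k[t_i,t_i+1]$. $T(n,s)$ is the number of edges of the balanced complete $s$-partite graph on $n$ vertices. For $\varepsilon>0$, a separated set $P$ is an $\varepsilon$-nearly $k$-distance set (with distances $1\le t_1<\dots<t_k$) if $\|p_1-p_2\|\in\bigcup_{i=1}^k[t_i,t_i+\varepsilon]$ for all distinct $p_1,p_2\in P$. The angle between a vector $v$ and an affine subspace $\Lambda$ is the infimum of the angles between $v$ and vectors $w\in\Lambda-\Lambda$. A set $P\subseteq\mathbb{R}^d$ is $(d-1,\alpha)$-flat if for every $p\in P$ there is a hyperplane $\Lambda_p$ such that every vector $p-q$, $q\in P$, makes angle at most $\alpha$ with $\Lambda_p$. $N_k(d)$ is the largest $N$ such that for every $\varepsilon,\alpha>0$ there exists a $(d-1,\alpha)$-flat $\varepsilon$-nearly $k$-distance set in $\mathbb{R}^d$ of cardinality $N$. *)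

(* Defs.v *)
From HB Require Import structures.
From mathcomp Require Import all_boot all_order all_algebra.
From mathcomp Require Import all_classical all_reals.
From mathcomp Require Import trigo.
Set Implicit Arguments. Unset Strict Implicit. Unset Printing Implicit Defensive.
Import Order.TTheory GRing.Theory Num.Theory.
Local Open Scope ring_scope.
Local Open Scope classical_set_scope.

Section Defs.
Variable R : realType.

Definition dotv (d : nat) (u v : 'rV[R]_d) : R := \sum_(i < d) u ord0 i * v ord0 i.
Definition enorm (d : nat) (u : 'rV[R]_d) : R := Num.sqrt (dotv u u).
Definition edist (d : nat) (p q : 'rV[R]_d) : R := enorm (p - q).

Definition separated (d n : nat) (P : 'I_n -> 'rV[R]_d) : Prop :=
  forall i j : 'I_n, i != j -> 1 <= edist (P i) (P j).

Definition good_pairs (d n k : nat) (S : 'I_n -> 'rV[R]_d) (t : 'I_k -> R) : nat :=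
  #|[set p : 'I_n * 'I_n | (p.1 < p.2)%N &&
      `[< exists i : 'I_k, t i <= edist (S p.1) (S p.2) <= t i + 1 >] ]|.

Definition M_attainable (k d n M : nat) : Prop :=
  exists (S : 'I_n -> 'rV[R]_d) (t : 'I_k -> R),
    separated S /\ (forall i : 'I_k, 1 <= t i) /\
    (forall i j : 'I_k, (i <= j)%N -> t i <= t j) /\
    (M <= good_pairs S t)%N.

(* M_k(d,n): the largest such M (it is at most 'C(n,2)) *)
Definition Mk (k d n : nat) : nat :=
  \max_(M < 'C(n, 2).+1 | `[< M_attainable k d n M >]) M.

Definition vangle (d : nat) (v w : 'rV[R]_d) : R :=
  acos (dotv v w / (enorm v * enorm w)).

Definition hyperplane (d : nat) (u : 'rV[R]_d) (c : R) : set 'rV[R]_d :=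
  [set x | dotv u x = c].

Definition diffset (d : nat) (L : set 'rV[R]_d) : set 'rV[R]_d :=
  [set x - y | x in L & y in L].

Definition angle_sub (d : nat) (v : 'rV[R]_d) (L : set 'rV[R]_d) : R :=
  inf [set vangle v w | w in [set w | diffset L w /\ w != 0]].

Definition flat (d N : nat) (alpha : R) (P : 'I_N -> 'rV[R]_d) : Prop :=
  forall p : 'I_N, exists (u : 'rV[R]_d) (c : R), u != 0 /\
    forall q : 'I_N, q != p ->
      angle_sub (P p - P q) (hyperplane u c) <= alpha.

Definition nearly_k_distance (k d N : nat) (eps : R) (P : 'I_N -> 'rV[R]_d)
    (t : 'I_k -> R) : Prop :=
  separated P /\ (forall i : 'I_k, 1 <= t i) /\
  (forall i j : 'I_k, (i < j)%N -> t i < t j) /\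
  (forall p q : 'I_N, p != q ->
     exists i : 'I_k, t i <= edist (P p) (P q) <= t i + eps).

Definition Nk_admissible (k d N : nat) : Prop :=
  forall eps alpha : R, 0 < eps -> 0 < alpha ->
    exists (P : 'I_N -> 'rV[R]_d) (t : 'I_k -> R),
      flat alpha P /\ nearly_k_distance eps P t.

Definition is_Nk (k d N : nat) : Prop :=
  Nk_admissible k d N /\ forall N', Nk_admissible k d N' -> (N' <= N)%N.

End Defs.

(* T(n,s): edges of the balanced complete s-partite graph on vertex set 'I_n,
   parts = residue classes mod s (sizes differ by at most one) *)
Definition Turan (n s : nat) : nat :=
  #|[set p : 'I_n * 'I_n | (p.1 < p.2)%N && (p.1 %% s != p.2 %% s)%N]|.

(* Main.v *)
Require Import Defs.
From HB Require Import structures.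
From mathcomp Require Import all_boot all_order all_algebra.
From mathcomp Require Import all_classical all_reals trigo.
From mathcomp Require Import ring lra zify.
Import Order.TTheory GRing.Theory Num.Theory.
Local Open Scope ring_scope.

Lemma memsetb (T : Type) (b : T -> bool) x :
  (x \in [set y | b y]%classic) = b x.
Proof. by apply/idP/idP => h; [exact: (set_mem h) | exact: mem_set]. Qed.

Lemma count_same (N j : nat) :
  (\sum_(i < j) (((i %% N)%N == (j %% N)%N) : nat))%N = (j %/ N)%N.
Proof.
rewrite divn_count_dvd.
rewrite (eq_bigr (fun i : 'I_j => (N %| j - i)%N : nat)); last first.
  move=> i _; rewrite eq_sym eqn_mod_dvd //; exact: ltnW.
rewrite -(big_mkord xpredT (fun i => (N %| j - i)%N : nat)).
rewrite big_nat_rev /= [RHS]big_add1 /=.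
apply: eq_big_nat => i /andP[_ hi].
congr (nat_of_bool (_ %| _))%N.
lia.
Qed.

Lemma turan_sum (n N : nat) :
  Turan n N = (\sum_(j < n) (j - j %/ N))%N.
Proof.
rewrite /Turan -sum1_card.
rewrite (big_mkcond (fun p => p \in _)) /=.
rewrite (eq_bigr (fun p : 'I_n * 'I_n => if (p.1 < p.2)%N && (p.1 %% N != p.2 %% N)%N then 1%N else 0%N)); last first.
  by move=> p _; rewrite memsetb.
rewrite -(pair_bigA _ (fun (i j : 'I_n) =>
   if (i < j)%N && ((i %% N)%N != (j %% N)%N)%N then 1%N else 0%N)) /=.
rewrite exchange_big /=.
apply: eq_bigr => j _.
rewrite -(count_same N j).
rewrite (eq_bigr (fun i : 'I_n => if (i < j)%N then (((i %% N)%N != (j %% N)%N) : nat) else 0%N)); last first.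
  by move=> i _; case: (i < j)%N; case: (_ == _).
rewrite -big_mkcond /= -(big_ord_widen n (fun i => (((i %% N)%N != (j %% N)%N) : nat))); last exact: ltnW.
have h : (\sum_(i < j) (((i %% N)%N != (j %% N)%N) : nat) + \sum_(i < j) (((i %% N)%N == (j %% N)%N) : nat) = j)%N.
  rewrite -big_split /= (eq_bigr (fun=> 1%N)) ?sum1_card ?card_ord // => i _.
  by case: (_ == _).
by move/(congr1 (subn^~ (\sum_(i < j) (((i %% N)%N == (j %% N)%N) : nat)))): h; rewrite addnK.
Qed.

Lemma turan_exact (R : realType) (n N : nat) : (0 < N)%N ->
  (2 * N%:R) * ((\sum_(j < n) (j - j %/ N))%N)%:R =
  N%:R * (n%:R * (n%:R - 1)) - n%:R ^+ 2 + n%:R * N%:R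
   - ((n %% N)%N)%:R * (N%:R - ((n %% N)%N)%:R) :> R.
Proof.
move=> N0; elim: n => [|n IH].
  by rewrite big_ord0 mod0n; ring.
rewrite big_ord_recr /= natrD natrB ?leq_div // mulrDr IH.
have hq : (n %/ N)%N%:R * N%:R = n%:R - ((n %% N)%N)%:R :> R.
  have e : n%:R = (n%/N)%N%:R * N%:R + ((n%%N)%N)%:R :> R.
    by rewrite -natrM -natrD -divn_eq.
  by rewrite [in RHS]e addrK.
have rN : (n %% N < N)%N by rewrite ltn_pmod.
rewrite modnS; case: ifP => hd.
  have hr : (n %% N).+1 = N.
    have : (N %| (n %% N).+1)%N.
      by move: hd; rewrite {1}(divn_eq n N) -addnS dvdn_addr // dvdn_mull.
    move/dvdn_leq => /(_ isT) => h; lia.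
  have hr' : ((n %% N)%N)%:R = N%:R - 1 :> R by rewrite -[in RHS]hr -addn1 natrD addrK.
  rewrite hr' -[n.+1]addn1 natrD.
  nra.
rewrite -[n.+1]addn1 natrD -[(n %% N).+1]addn1 natrD.
nra.
Qed.

Lemma turan_lb (R : realType) (n N : nat) : (0 < N)%N ->
  (n%:R ^+ 2 / 2) * (1 - N%:R^-1) - (N%:R / 2) <= (Turan n N)%:R :> R.
Proof.
move=> N0; rewrite turan_sum.
have E := @turan_exact R n N N0.
set T := ((\sum_(j < n) _)%N)%:R in E *.
set r := ((n %% N)%N)%:R in E.
set x := n%:R in E *.
set M := N%:R in E *.
have M1 : 1 <= M by rewrite /M ler1n.
have r0 : 0 <= r by rewrite /r ler0n.
have rM : r <= M by rewrite /r /M ler_nat ltnW // ltn_pmod.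
have hy : M * M^-1 = 1 by rewrite mulfV // gt_eqF // (lt_le_trans ltr01 M1).
set y := M^-1 in hy *.
have y0 : 0 <= y by rewrite /y invr_ge0 (le_trans ler01 M1).
have key : 2 * M * ((x ^+ 2 / 2) * (1 - y) - M / 2) <= 2 * M * T.
  rewrite E.
  have -> : 2 * M * ((x ^+ 2 / 2) * (1 - y) - M / 2) = M * x^+2 - x^+2 * (M * y) - M * M by field.
  rewrite hy; nra.
rewrite -(ler_pM2l (_ : 0 < 2 * M)) //; nra.
Qed.

Lemma turan_le_bin (n N : nat) : (Turan n N <= 'C(n, 2))%N.
Proof.
rewrite turan_sum -bin2_sum big_mkord; apply: leq_sum => j _; exact: leq_subr.
Qed.


Section Dot.
Context (R : realType) (d : nat).
Implicit Types u v w : 'rV[R]_d.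

Lemma dotvC u v : dotv u v = dotv v u.
Proof. by apply: eq_bigr => i _; rewrite mulrC. Qed.

Lemma dotvDl u v w : dotv (u + v) w = dotv u w + dotv v w.
Proof. by rewrite /dotv -big_split; apply: eq_bigr => i _; rewrite mxE mulrDl. Qed.

Lemma dotvZl a u w : dotv (a *: u) w = a * dotv u w.
Proof. by rewrite /dotv mulr_sumr; apply: eq_bigr => i _; rewrite mxE mulrA. Qed.

Lemma dotvNl u w : dotv (- u) w = - dotv u w.
Proof. by rewrite -scaleN1r dotvZl mulN1r. Qed.

Lemma dotvDr u v w : dotv w (u + v) = dotv w u + dotv w v.
Proof. by rewrite dotvC dotvDl !(dotvC w). Qed.

Lemma dotvZr a u w : dotv w (a *: u) = a * dotv w u.
Proof. by rewrite dotvC dotvZl dotvC. Qed.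

Lemma dotvNr u w : dotv w (- u) = - dotv w u.
Proof. by rewrite dotvC dotvNl dotvC. Qed.

Lemma dotv_ge0 u : 0 <= dotv u u.
Proof. by apply: sumr_ge0 => i _; rewrite -expr2 sqr_ge0. Qed.

Lemma dotv_gt0 u : u != 0 -> 0 < dotv u u.
Proof.
move=> u0; rewrite lt_def dotv_ge0 andbT; apply: contra u0 => /eqP h.
apply/eqP/rowP => i; rewrite mxE.
have hp : forall j : 'I_d, true -> 0 <= u ord0 j * u ord0 j.
  by move=> j _; rewrite -expr2 sqr_ge0.
have /eqP := psumr_eq0P hp h (i:=i) isT.
by rewrite mulf_eq0 orbb (ord1 ord0) => /eqP.
Qed.

Lemma dotv0r u : dotv u 0 = 0.
Proof. by rewrite /dotv big1 // => i _; rewrite mxE mulr0. Qed.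

Lemma cs u v : dotv u v ^+ 2 <= dotv u u * dotv v v.
Proof.
case: (eqVneq v 0) => [->|v0]; first by rewrite !dotv0r expr2 !mulr0.
have B := dotv_gt0 v v0.
have h := dotv_ge0 (dotv v v *: u - dotv u v *: v).
rewrite !(dotvDl, dotvDr, dotvNl, dotvNr, dotvZl, dotvZr) [dotv v u]dotvC in h.
nra.
Qed.

Lemma bessel2 D u w : u != 0 -> w != 0 -> dotv u w = 0 ->
  dotv D u ^+ 2 * dotv w w + dotv D w ^+ 2 * dotv u u
   <= dotv u u * dotv w w * dotv D D.
Proof.
move=> u0 w0 uw.
have A := dotv_gt0 u u0; have B := dotv_gt0 w w0.
have h := dotv_ge0 ((dotv u u * dotv w w) *: D - (dotv D u * dotv w w) *: u
              - (dotv D w * dotv u u) *: w).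
rewrite !(dotvDl, dotvDr, dotvNl, dotvNr, dotvZl, dotvZr) in h.
rewrite [dotv u D]dotvC [dotv w D]dotvC [dotv w u]dotvC uw in h.
set a := dotv D u in h *; set b := dotv D w in h *.
set AA := dotv u u in h A *; set BB := dotv w w in h B *.
set DD := dotv D D in h *.
have e : 0 <= AA * BB * (AA * BB * DD - a ^+ 2 * BB - b ^+ 2 * AA) by nra.
have AB : 0 < AA * BB by exact: mulr_gt0.
rewrite pmulr_rge0 // in e; lra.
Qed.

Lemma enorm_gt0 u : u != 0 -> 0 < enorm u.
Proof. by move=> u0; rewrite /enorm sqrtr_gt0 dotv_gt0. Qed.

Lemma enorm_sqr u : enorm u ^+ 2 = dotv u u.
Proof. by rewrite /enorm sqr_sqrtr // dotv_ge0. Qed.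

Lemma cs_abs D w : D != 0 -> w != 0 ->
  - (enorm D * enorm w) <= dotv D w <= enorm D * enorm w.
Proof.
move=> D0 w0.
have s0 : 0 < enorm D * enorm w by rewrite mulr_gt0 // enorm_gt0.
have h : dotv D w ^+ 2 <= (enorm D * enorm w) ^+ 2.
  by rewrite exprMn !enorm_sqr cs.
apply/andP; split; nra.
Qed.

Lemma cs_range D w : D != 0 -> w != 0 ->
  -1 <= dotv D w / (enorm D * enorm w) <= 1.
Proof.
move=> D0 w0.
have s0 : 0 < enorm D * enorm w by rewrite mulr_gt0 // enorm_gt0.
have /andP[h1 h2] := cs_abs D w D0 w0.
by rewrite ler_pdivrMr // ler_pdivlMr // mul1r mulN1r h1 h2.
Qed.

Lemma dotv_delta u i : dotv u (delta_mx ord0 i) = u ord0 i.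
Proof.
rewrite /dotv (bigD1 i) //= big1 => [|k ki]; rewrite !mxE.
  by rewrite !eqxx mulr1 addr0.
by rewrite (negbTE ki) mulr0.
Qed.

Lemma orth_exists u : (2 <= d)%N -> u != 0 -> exists w, w != 0 /\ dotv u w = 0.
Proof.
move=> d2 u0.
have [i ui] : exists i, u ord0 i != 0.
  case: (pickP (fun i => u ord0 i != 0)) => [i hi|h]; first by exists i.
  move/eqP: u0 => []; apply/rowP => i; rewrite mxE.
  by move: (h i) => /negbFE /eqP.
have d0 : (0 < d)%N by lia.
have d1 : (1 < d)%N by lia.
pose j : 'I_d := if i == Ordinal d0 then Ordinal d1 else Ordinal d0.
have ji : j != i.
  rewrite /j; case: ifP => [/eqP -> | /negbT]; last by rewrite eq_sym.
  by apply/eqP => /(congr1 val).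
exists (u ord0 j *: delta_mx ord0 i - u ord0 i *: delta_mx ord0 j); split.
  apply/eqP => /rowP /(_ j); rewrite !mxE !eqxx (negbTE ji) /= mulr0 mulr1 sub0r.
  by move/eqP; rewrite oppr_eq0 (negbTE ui).
rewrite dotvDr dotvNr !dotvZr !dotv_delta; ring.
Qed.

Lemma flat_lem (D u : 'rV[R]_d) (c eta : R) : (2 <= d)%N -> 0 < eta -> eta < 1 ->
  D != 0 -> u != 0 ->
  angle_sub D (hyperplane u c) <= acos (1 - eta) / 2 ->
  dotv D u ^+ 2 <= 2 * eta * dotv D D * dotv u u.
Proof.
move=> d2 e0 e1 D0 u0 hang.
set al := acos (1 - eta) / 2 in hang.
have r1 : -1 <= 1 - eta <= 1 by apply/andP; split; lra.
have al0 : 0 < al.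
  rewrite /al divr_gt0 // acos_gt0 //; apply/andP; split; lra.
have U := dotv_gt0 u u0.
have [w0 [w00 uw0]] := orth_exists u d2 u0.
have diffP : forall w, diffset (hyperplane u c) w -> dotv u w = 0.
  move=> w [x hx [y hy <-]]; rewrite dotvDr dotvNr.
  by move: hx hy; rewrite /hyperplane /= => -> ->; rewrite subrr.
have diff0 : diffset (hyperplane u c) w0.
  pose y := (c / dotv u u) *: u.
  have hy : dotv u y = c by rewrite dotvZr -mulrA mulVf ?mulr1 // gt_eqF.
  exists (y + w0); first by rewrite /hyperplane /= dotvDr hy uw0 addr0.
  by exists y => //; rewrite addrC addKr.
set E := ([set vangle D w | w in [set w | diffset (hyperplane u c) w /\ w != 0]])%classic.
have hinf : has_inf E.
  split; first by exists (vangle D w0); exists w0.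
  exists 0 => e [w [_ wn] <-]; rewrite /vangle acos_ge0 //.
  exact: cs_range D w D0 wn.
have al2 : 0 < al / 2 by lra.
have [e [w [dw wn] <-] he] := inf_adherent al2 hinf.
have he' : vangle D w < acos (1 - eta).
  have hh : inf E <= al by [].
  have : vangle D w < 2 * al by lra.
  by rewrite /al mulrC divfK // pnatr_eq0.
move: he'; rewrite /vangle.
have cr := cs_range D w D0 wn.
rewrite -(ltr_cos); first last.
- by rewrite in_itv /= acos_ge0 // acos_lepi.
- by rewrite in_itv /= acos_ge0 // acos_lepi.
rewrite !acosK ?in_itv //= => hc.
have s0 : 0 < enorm D * enorm w by rewrite mulr_gt0 // enorm_gt0.
rewrite ltr_pdivlMr // in hc.
have hb : ((1 - eta) * (enorm D * enorm w)) ^+ 2 < dotv D w ^+ 2.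
  rewrite -subr_gt0 subr_sqr; apply: mulr_gt0; first lra.
  have : 0 <= 1 - eta by lra.
  nra.
rewrite !exprMn !enorm_sqr in hb.
have bes := bessel2 D u w u0 wn (diffP w dw).
have W := dotv_gt0 w wn.
have DD := dotv_gt0 D D0.
set a := dotv D u in bes *; set b := dotv D w in hb bes.
set AA := dotv u u in U bes *; set BB := dotv w w in W hb bes.
set DDD := dotv D D in DD hb bes *.
rewrite -(ler_pM2r W).
have h1 : b ^+ 2 * AA >= (1 - eta) ^+ 2 * (DDD * BB) * AA.
  by rewrite ler_pM2r // ltW.
have h2 : (1 - eta) ^+ 2 >= 1 - 2 * eta by nra.
have h3 : (1 - eta) ^+ 2 * (DDD * BB) * AA >= (1 - 2 * eta) * (DDD * BB) * AA.
  by rewrite ler_pM2r // ler_pM2r ?mulr_gt0.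
nra.
Qed.

Lemma dist_bounds (D wp wq : 'rV[R]_d) (a b m sig L : R) : L = 16 * m ^+ 2 ->
  dotv wp wp = 1 -> dotv wq wq = 1 -> 0 <= a <= m -> 0 <= b <= m -> 1 <= m ->
  0 <= sig -> 16 * m * sig <= 1 -> 1 <= dotv D D ->
  dotv D wp ^+ 2 <= sig ^+ 2 * dotv D D -> dotv D wq ^+ 2 <= sig ^+ 2 * dotv D D ->
  (L * enorm D - 1/4) ^+ 2 <= dotv (L *: D + a *: wp - b *: wq) (L *: D + a *: wp - b *: wq)
   <= (L * enorm D + 1/4) ^+ 2.
Proof.
move=> hL hp hq /andP[a0 am] /andP[b0 bm] m1 s0 ms DD1 hx hy.
have r2 := enorm_sqr D.
set r := enorm D in r2 *.
have r0 : 0 <= r by rewrite /r /enorm sqrtr_ge0.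
have r1 : 1 <= r.
  have : 1 <= r ^+ 2 by rewrite r2.
  nra.
have z2 := cs wp wq; rewrite hp hq mul1r in z2.
rewrite !(dotvDl, dotvDr, dotvNl, dotvNr, dotvZl, dotvZr) hp hq.
rewrite [dotv wp D]dotvC [dotv wq D]dotvC [dotv wq wp]dotvC.
rewrite -r2 in hx hy.
set x := dotv D wp in hx *; set y := dotv D wq in hy *; set z := dotv wp wq in z2 *.
have sr : 0 <= sig * r by rewrite mulr_ge0.
have hx1 : - (sig * r) <= x <= sig * r.
  by apply/andP; split; nra.
have hy1 : - (sig * r) <= y <= sig * r.
  by apply/andP; split; nra.
have hz : - 1 <= z <= 1 by apply/andP; split; nra.
case/andP: hx1 => hx1 hx2; case/andP: hy1 => hy1 hy2; case/andP: hz => hz1 hz2.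
have ax1 : a * x <= a * (sig * r) by rewrite ler_wpM2l.
have ax2 : - (a * (sig * r)) <= a * x by rewrite -mulrN ler_wpM2l.
have by1 : b * y <= b * (sig * r) by rewrite ler_wpM2l.
have by2 : - (b * (sig * r)) <= b * y by rewrite -mulrN ler_wpM2l.
have ab0 : 0 <= a * b by rewrite mulr_ge0.
have abz1 : a * b * z <= a * b by rewrite ler_piMr.
have abz2 : - (a * b) <= a * b * z by rewrite -mulrN1 ler_wpM2l.
have as1 : a * (sig * r) <= r / 16.
  have : a * sig <= 1 / 16 by nra.
  nra.
have bs1 : b * (sig * r) <= r / 16.
  have : b * sig <= 1 / 16 by nra.
  nra.
have L0 : 0 <= L by rewrite hL mulr_ge0 // sqr_ge0.
have Lx1 : L * (a * x) <= L * (r / 16) by rewrite ler_wpM2l // (le_trans ax1).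
have Lx2 : - (L * (r / 16)) <= L * (a * x).
  by rewrite -mulrN ler_wpM2l // (le_trans _ ax2) // lerN2.
have Ly1 : L * (b * y) <= L * (r / 16) by rewrite ler_wpM2l // (le_trans by1).
have Ly2 : - (L * (r / 16)) <= L * (b * y).
  by rewrite -mulrN ler_wpM2l // (le_trans _ by2) // lerN2.
have ab2 : a * a + b * b + 2 * (a * b) <= 4 * m ^+ 2 by nra.
have Lr : L <= L * r by rewrite ler_peMr.
have mL : 4 * m ^+ 2 = L / 4 by rewrite hL; field.
have L16 : 16 <= L by rewrite hL; nra.
apply/andP; split; nra.
Qed.

Lemma sqrt_between (Q lo hi : R) : lo ^+ 2 <= Q -> Q <= hi ^+ 2 -> 0 <= hi ->
  lo <= Num.sqrt Q <= hi.
Proof.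
move=> h1 h2 h0; apply/andP; split.
  case: (lerP lo 0) => l0; first exact: (le_trans l0 (sqrtr_ge0 _)).
  by rewrite -(ger0_norm (ltW l0)) -sqrtr_sqr ler_wsqrtr.
by rewrite -(ger0_norm h0) -sqrtr_sqr ler_wsqrtr.
Qed.

Lemma sep_dd (p q : 'rV[R]_d) : 1 <= edist p q -> 1 <= dotv (p - q) (p - q).
Proof.
rewrite /edist /enorm => h.
by rewrite -(@ler_sqrt R 1) ?sqrtr1 ?dotv_ge0.
Qed.

End Dot.


Lemma part1 (R : realType) (k d N n : nat) : (1 <= k)%N -> (2 <= d)%N -> (0 < N)%N ->
  Nk_admissible R k d N -> (Turan n N <= Mk R k d n)%N.
Proof.
move=> k1 d2 N0 adm.
pose m : R := n%:R + 1.
have m1 : 1 <= m by rewrite /m lerDr ler0n.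
pose sig : R := 1 / (16 * m).
have sig0 : 0 < sig by rewrite /sig divr_gt0 // mulr_gt0 // (lt_le_trans ltr01 m1).
have msig : 16 * m * sig = 1 by rewrite /sig mulrC div1r mulVf // gt_eqF // mulr_gt0 // (lt_le_trans ltr01 m1).
have sig16 : sig <= 1/16 by nra.
pose eta : R := sig ^+ 2 / 2.
have eta0 : 0 < eta by rewrite /eta divr_gt0 // exprn_gt0.
have eta1 : eta < 1 by rewrite /eta; nra.
pose L : R := 16 * m ^+ 2.
have L16 : 16 <= L by rewrite /L; nra.
pose eps : R := 1 / (4 * L).
have eps0 : 0 < eps by rewrite /eps divr_gt0 // mulr_gt0 //; lra.
have Leps : L * eps = 1/4 by rewrite /eps; field; lra.
pose al : R := acos (1 - eta) / 2.
have al0 : 0 < al.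
  rewrite /al divr_gt0 // acos_gt0 //; apply/andP; split; lra.
have [P [t [hflat [hsep [ht1 [htinc hnear]]]]]] := adm eps al eps0 al0.
have hf0 : forall p : 'I_N, exists uc : 'rV[R]_d * R, uc.1 != 0 /\
    forall q, q != p -> angle_sub (P p - P q) (hyperplane uc.1 uc.2) <= al.
  by move=> p; have [u [c h]] := hflat p; exists (u, c).
have [f hf] := choice hf0.
pose u p := (f p).1.
pose w p := (enorm (u p))^-1 *: u p.
have ww : forall p, dotv (w p) (w p) = 1.
  move=> p; have u0 := (hf p).1.
  have e0 : enorm (u p) != 0 by rewrite gt_eqF // enorm_gt0.
  by rewrite dotvZl dotvZr -enorm_sqr; field.
have hDD : forall p q, p != q -> 1 <= dotv (P p - P q) (P p - P q).
  by move=> p q pq; apply: sep_dd; apply: hsep.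
have hD0 : forall p q, p != q -> P p - P q != 0.
  move=> p q pq; apply/eqP => h; have := hDD p q pq; rewrite h dotv0r; lra.
have hw : forall p q, p != q ->
    dotv (P p - P q) (w p) ^+ 2 <= sig ^+ 2 * dotv (P p - P q) (P p - P q).
  move=> p q pq; have [u0 hang] := hf p.
  have qp : q != p by rewrite eq_sym.
  have := @flat_lem R d (P p - P q) (u p) (f p).2 eta d2 eta0 eta1 (hD0 p q pq) u0 (hang q qp).
  have e0 : 0 < enorm (u p) by rewrite enorm_gt0.
  move=> h; rewrite /w dotvZr exprMn exprVn enorm_sqr mulrC ler_pdivrMr ?dotv_gt0 //.
  have -> : sig ^+ 2 = 2 * eta by rewrite /eta; field.
  exact: h.
have hw2 : forall p q, p != q ->
    dotv (P p - P q) (w q) ^+ 2 <= sig ^+ 2 * dotv (P p - P q) (P p - P q).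
  move=> p q pq; have qp : q != p by rewrite eq_sym.
  have := hw q p qp.
  by rewrite -[P q - P p]opprB dotvNl sqrrN dotvNl dotvNr opprK.
have hr1 : forall p q, p != q -> 1 <= enorm (P p - P q).
  move=> p q pq; rewrite /enorm -sqrtr1 ler_wsqrtr //; exact: hDD.
pose cl (i : 'I_n) : 'I_N := Ordinal (ltn_pmod i N0).
pose pos (i : 'I_n) : R := (i %/ N)%N%:R.
have posb : forall i, 0 <= pos i <= m.
  move=> i; rewrite /pos ler0n /= /m.
  have : (i %/ N <= n)%N by exact: (leq_trans (leq_div i N) (ltnW (ltn_ord i))).
  rewrite -(ler_nat R); lra.
pose S i := L *: P (cl i) + pos i *: w (cl i).
pose t' (l : 'I_k) := L * t l - 1/2.
have key : forall i j, cl i != cl j ->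
    L * enorm (P (cl i) - P (cl j)) - 1/4 <= edist (S i) (S j)
      <= L * enorm (P (cl i) - P (cl j)) + 1/4.
  move=> i j cij.
  have e : S i - S j = L *: (P (cl i) - P (cl j)) + pos i *: w (cl i) - pos j *: w (cl j).
    by apply/rowP => z; rewrite !mxE; ring.
  rewrite /edist e.
  have msl : 16 * m * sig <= 1 by rewrite msig.
  have /andP[h1 h2] := @dist_bounds R d (P (cl i) - P (cl j)) (w (cl i)) (w (cl j))
     (pos i) (pos j) m sig L erefl (ww _) (ww _) (posb i) (posb j) m1 (ltW sig0)
     msl (hDD _ _ cij) (hw _ _ cij) (hw2 _ _ cij).
  apply: sqrt_between => //.
  have := hr1 _ _ cij; nra.
have hatt : M_attainable R k d n (Turan n N).
  exists S, t'; split; [|split; [|split]].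
  - move=> i j ij; case: (eqVneq (cl i) (cl j)) => [cij | cij]; last first.
      have /andP[h1 _] := key i j cij; have := hr1 _ _ cij; nra.
    have e : S i - S j = (pos i - pos j) *: w (cl i).
      by apply/rowP => z; rewrite /S -cij !mxE; ring.
    have rij : (i %% N = j %% N)%N by move/(congr1 val): cij.
    have qij : (i %/ N)%N != (j %/ N)%N.
      apply: contra ij => /eqP hq; apply/eqP/val_inj.
      by rewrite /= (divn_eq i N) (divn_eq j N) hq rij.
    have hq : 1 <= (pos i - pos j) ^+ 2.
      rewrite /pos; case: (ltngtP (i %/ N) (j %/ N)) qij => // h _.
      + have : ((i %/ N).+1 <= j %/ N)%N by [].
        rewrite -(ler_nat R) -natr1; nra.
      + have : ((j %/ N).+1 <= i %/ N)%N by [].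
        rewrite -(ler_nat R) -natr1; nra.
    rewrite /edist /enorm e dotvZl dotvZr ww mulr1 -sqrtr1 ler_wsqrtr //.
  - move=> l; rewrite /t'; have := ht1 l; nra.
  - move=> i j ij; rewrite /t'; rewrite leq_eqVlt in ij.
    case/orP: ij => [/eqP/val_inj -> | h]; first lra.
    have := htinc i j h; nra.
  - rewrite /good_pairs; apply: subset_leq_card; apply/fintype.subsetP => p.
    rewrite !memsetb => /andP[lt ne]; rewrite lt /=; apply/asboolP.
    have cij : cl p.1 != cl p.2.
      by apply/eqP => /(congr1 val) /= h; rewrite h eqxx in ne.
    have [l hl] := hnear _ _ cij.
    exists l; rewrite /edist in hl; case/andP: hl => hl1 hl2.
    have /andP[h1 h2] := key _ _ cij.
    rewrite /t'; apply/andP; split; nra.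
have lt : (Turan n N < 'C(n, 2).+1)%N by rewrite ltnS turan_le_bin.
exact: (leq_bigmax_cond (Ordinal lt) (asboolT hatt)).
Qed.


Lemma adm1 (R : realType) (k d : nat) : (2 <= d)%N -> Nk_admissible R k d 1.
Proof.
move=> d2 eps al _ _.
have d0 : (0 < d)%N by lia.
exists (fun _ => 0), (fun l : 'I_k => (l%:R + 1)); split.
  move=> p; exists (delta_mx ord0 (Ordinal d0)), 0; split.
    apply/eqP => /rowP /(_ (Ordinal d0)); rewrite !mxE !eqxx /=.
    by move/eqP; rewrite oner_eq0.
  by move=> q; rewrite [q]ord1 [p]ord1 eqxx.
split; first by move=> i j; rewrite [i]ord1 [j]ord1 eqxx.
split; first by move=> i; rewrite lerDr ler0n.
split; first by move=> i j ij; rewrite ltrD2r ltr_nat.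
by move=> p q; rewrite [p]ord1 [q]ord1 eqxx.
Qed.

Theorem proposition2 (R : realType) (k d : nat) :
  (1 <= k)%N -> (2 <= d)%N ->
  forall N : nat, is_Nk R k d N ->
    (forall n : nat, (Turan n N <= Mk R k d n)%N) /\
    (exists C : R, forall n : nat,
       (n%:R ^+ 2 / 2) * (1 - N%:R^-1) - C <= (Turan n N)%:R).
Proof.
move=> k1 d2 N [adm maxN].
have N0 : (0 < N)%N := maxN 1%N (@adm1 R k d d2).
split; first by move=> n; exact: part1.
by exists (N%:R / 2) => n; exact: turan_lb.
Qed.
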